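(* Let $(W,V)$ be an independent-type $\mathcal Y$-valued transition matrix on $\mathcal X$ with $W$ irreducible, and $P$ a distribution on $\mathcal X$. Then $$\mathcal L^I_{2,W,V}=\big\{([W,A],C)\in\mathcal G^I:\ A\in M_d(\mathbb R),\ A^Tu_{\mathcal X}=0,\ W[D(V_y),A]=WD(C_y)\ \forall y\in\mathcal Y\big\},$$ $$\mathcal L^I_{2,P,W,V}=\big\{([W,A],C)\in\mathcal G^I:\ A\in M_d(\mathbb R),\ A^Tu_{\mathcal X}=0,\ AP=0,\ W[D(V_y),A]=WD(C_y)\ \forall y\in\mathcal Y\big\},$$ where $[X,Y]=XY-YX$.
   Context: Let $\mathcal X=\{1,\dots,d\}$, $\mathcal Y=\{1,\dots,d_Y\}$, $u_{\mathcal X}\in\mathbb R^{\mathcal X}$ the all-ones vector. An independent-type $\mathcal Y$-valued transition matrix $(W,V)$ consists of a column-stochastic $d\times d$ matrix $W(x|x')$ and a transition matrix $V$ from $\mathcal X$ to $\mathcal Y$ ($V(y|x')\ge0$, $\sum_yV(y|x')=1$), defining $W_y:=WD(V_y)$, where $V_y\in\mathbb R^{\mathcal X}$, $V_y(x')=V(y|x')$, and $D(v)$ is the diagonal matrix with diagonal $v$. $\mathcal G^I$ is the set of pairs $(B,C)$ with $B$ a real $d\times d$ matrix vanishing wherever $W(x|x')=0$ and $C=(C_y)_{y\in\mathcal Y}$, $C_y\in\mathbb R^{\mathcal X}$, $C_y(x')=0$ wherever $V(y|x')=0$. $\mathcal L^I_{1,W,V}:=\{(B,C)\in\mathcal G^I: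 B^Tu_{\mathcal X}=0,\ \sum_yC_y=0\}$. Let $\mathcal L_2:=\{(W_yA-AW_y)_{y\in\mathcal Y}: A\in M_d(\mathbb R),\ A^Tu_{\mathcal X}=0\}$ and $\mathcal L_{2,P}:=\{(W_yA-AW_y)_{y}: A^Tu_{\mathcal X}=0,\ AP=0\}$. Then $\mathcal L^I_{2,W,V}:=\{(B,C)\in\mathcal L^I_{1,W,V}: (BD(V_y)+WD(C_y))_{y}\in\mathcal L_2\}$ and $\mathcal L^I_{2,P,W,V}:=\{(B,C)\in\mathcal L^I_{1,W,V}:(BD(V_y)+WD(C_y))_y\in\mathcal L_{2,P}\}$. *)

(* Defs.v *)
From HB Require Import structures.
From mathcomp Require Import all_boot all_order all_algebra.
Set Implicit Arguments. Unset Strict Implicit. Unset Printing Implicit Defensive.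
Import Order.TTheory GRing.Theory Num.Theory.
Local Open Scope ring_scope.

Section Defs.
Variables (R : realFieldType) (d dY : nat).

(* Convention: W x x' = W(x|x') (row = output, column = input). *)
Definition col_stochastic (W : 'M[R]_d) : Prop :=
  (forall x x', 0 <= W x x') /\ (forall x', \sum_x W x x' = 1).

(* V y x' = V(y|x') *)
Definition transition_mx (V : 'M[R]_(dY, d)) : Prop :=
  (forall y x', 0 <= V y x') /\ (forall x', \sum_y V y x' = 1).

Definition irreducible_mx (W : 'M[R]_d) : Prop :=
  forall x x' : 'I_d, exists n : nat, 0 < (W ^+ n) x x'.

Definition distribution (P : 'cV[R]_d) : Prop :=
  (forall x, 0 <= P x ord0) /\ \sum_x P x ord0 = 1.

Definition uX : 'cV[R]_d := const_mx 1.

Definition DV (V : 'M[R]_(dY, d)) (y : 'I_dY) : 'M[R]_d := diag_mx (row y V).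

Definition Wy (W : 'M[R]_d) (V : 'M[R]_(dY, d)) (y : 'I_dY) : 'M[R]_d :=
  W *m DV V y.

Definition commr (X Y : 'M[R]_d) : 'M[R]_d := X *m Y - Y *m X.

(* (B, C) \in G^I ; C is stored as the matrix whose row y is C_y *)
Definition inGI (W : 'M[R]_d) (V : 'M[R]_(dY, d)) (B : 'M[R]_d) (C : 'M[R]_(dY, d)) : Prop :=
  (forall x x', W x x' = 0 -> B x x' = 0) /\ (forall y x', V y x' = 0 -> C y x' = 0).

Definition inL1 W V B C : Prop :=
  inGI W V B C /\ B^T *m uX = 0 /\ \sum_y row y C = 0.

(* (B D(V_y) + W D(C_y))_y \in L_2 *)
Definition inL2 W V B C : Prop :=
  inL1 W V B C /\
  exists A : 'M[R]_d, A^T *m uX = 0 /\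
    forall y, B *m DV V y + W *m diag_mx (row y C) = commr (Wy W V y) A.

(* (B D(V_y) + W D(C_y))_y \in L_{2,P} *)
Definition inL2P W V (P : 'cV[R]_d) B C : Prop :=
  inL1 W V B C /\
  exists A : 'M[R]_d, A^T *m uX = 0 /\ A *m P = 0 /\
    forall y, B *m DV V y + W *m diag_mx (row y C) = commr (Wy W V y) A.

End Defs.

(* Main.v *)
Require Import Defs.
From HB Require Import structures.
From mathcomp Require Import all_boot all_order all_algebra.
Import Order.TTheory GRing.Theory Num.Theory.
Local Open Scope ring_scope.

Lemma abc (M : zmodType) (a b c : M) : a - b + (c - a) = c - b.
Proof. by rewrite addrC addrA subrK. Qed.

Section Aux.
Variables (R : realFieldType) (d dY : nat).
Implicit Types (W B A : 'M[R]_d) (V C : 'M[R]_(dY, d)).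

Lemma sum_rows C : \sum_y row y C = \row_j (\sum_y C y j).
Proof. by apply/rowP => j; rewrite summxE !mxE; apply: eq_bigr => y _; rewrite mxE. Qed.

Lemma sum_DV V : (forall x', \sum_y V y x' = 1) -> \sum_y DV V y = 1%:M.
Proof.
move=> HV; rewrite /DV -raddf_sum sum_rows -diag_const_mx; congr diag_mx.
by apply/rowP => j; rewrite !mxE HV.
Qed.

Lemma sum_DC C : \sum_y row y C = 0 -> \sum_y diag_mx (row y C) = 0 :> 'M_d.
Proof. by move=> H; rewrite -raddf_sum H raddf0. Qed.

Lemma eq_stuff W V B C A :
  (forall x', \sum_y V y x' = 1) -> \sum_y row y C = 0 ->
  (forall y, B *m DV V y + W *m diag_mx (row y C) = commr (Wy W V y) A) ->
  B = commr W A.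
Proof.
move=> HV HC H.
have : \sum_y (B *m DV V y + W *m diag_mx (row y C)) = \sum_y commr (Wy W V y) A.
  by apply: eq_bigr => y _; apply: H.
rewrite big_split /= -!mulmx_sumr sum_DV // sum_DC // mulmx0 addr0 mulmx1.
move=> ->; rewrite /commr /Wy sumrB -!mulmx_suml -mulmx_sumr sum_DV //.
by rewrite -!mulmx_sumr sum_DV // !mulmx1.
Qed.

Lemma fwd W V B C A :
  B = commr W A ->
  (forall y, B *m DV V y + W *m diag_mx (row y C) = commr (Wy W V y) A) ->
  forall y, W *m commr (DV V y) A = W *m diag_mx (row y C).
Proof.
move=> -> H y; apply: (@addrI _ (commr W A *m DV V y)); rewrite H.
rewrite /commr /Wy !mulmxBl !mulmxBr !mulmxA.
by rewrite abc.
Qed.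

Lemma bwd W V B C A :
  B = commr W A ->
  (forall y, W *m commr (DV V y) A = W *m diag_mx (row y C)) ->
  (forall y, B *m DV V y + W *m diag_mx (row y C) = commr (Wy W V y) A).
Proof.
move=> -> H y; rewrite -H /commr /Wy !mulmxBl !mulmxBr !mulmxA.
by rewrite abc.
Qed.

Lemma cond1 W A : col_stochastic W -> A^T *m uX R d = 0 -> (commr W A)^T *m uX R d = 0.
Proof.
move=> [_ HW] HA; have HWu : W^T *m uX R d = uX R d.
  by apply/colP => i; rewrite !mxE; under eq_bigr do rewrite !mxE mulr1; rewrite HW.
by rewrite /commr linearB /= !trmx_mul mulmxBl -!mulmxA HWu HA mulmx0 subr0.
Qed.

Lemma cond2 W V C A : col_stochastic W -> transition_mx V ->
  (forall y, W *m commr (DV V y) A = W *m diag_mx (row y C)) ->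
  \sum_y row y C = 0.
Proof.
move=> [W0 HW] [_ HV] H.
have E : W *m diag_mx (\sum_y row y C) = 0.
  rewrite raddf_sum mulmx_sumr; under eq_bigr do rewrite -H.
  by rewrite -mulmx_sumr /commr sumrB -mulmx_suml -mulmx_sumr sum_DV // mulmx1 mul1mx subrr mulmx0.
apply/rowP => j; rewrite mxE.
have [x Hx] : exists x, W x j != 0.
  apply/existsP; apply: contraT; rewrite negb_exists => /forallP Hn.
  move: (HW j); rewrite big1 => [/eqP|x _]; last by apply/eqP; rewrite -[_ == _]negbK Hn.
  by rewrite eq_sym oner_eq0.
move/matrixP: E => /(_ x j); rewrite mul_mx_diag !mxE => /eqP.
by rewrite mulf_eq0 (negbTE Hx) /= => /eqP.
Qed.

End Aux.

Theorem theorem4 (R : realFieldType) (d dY : nat)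
  (W : 'M[R]_d) (V : 'M[R]_(dY, d)) (P : 'cV[R]_d) :
  col_stochastic W -> transition_mx V -> irreducible_mx W -> distribution P ->
  (forall (B : 'M[R]_d) (C : 'M[R]_(dY, d)),
     inL2 W V B C <->
     (inGI W V B C /\
      exists A : 'M[R]_d, A^T *m uX R d = 0 /\ B = commr W A /\
        forall y, W *m commr (DV V y) A = W *m diag_mx (row y C)))
  /\
  (forall (B : 'M[R]_d) (C : 'M[R]_(dY, d)),
     inL2P W V P B C <->
     (inGI W V B C /\
      exists A : 'M[R]_d, A^T *m uX R d = 0 /\ A *m P = 0 /\ B = commr W A /\
        forall y, W *m commr (DV V y) A = W *m diag_mx (row y C))).
Proof.
move=> HW HV _ _; split=> B C; split.
- move=> [[HG [_ HC]] [A [HA HE]]].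
  have HB := @eq_stuff _ _ _ _ _ _ _ _ (proj2 HV) HC HE.
  by split=> //; exists A; split=> //; split=> //; apply: fwd HB HE.
- move=> [HG [A [HA [HB HE]]]]; split.
    split=> //; split; first by rewrite HB; apply: cond1.
    exact: cond2 HW HV HE.
  by exists A; split=> //; apply: bwd.
- move=> [[HG [_ HC]] [A [HA [HP HE]]]].
  have HB := @eq_stuff _ _ _ _ _ _ _ _ (proj2 HV) HC HE.
  by split=> //; exists A; do 3 split=> //; apply: fwd HB HE.
- move=> [HG [A [HA [HP [HB HE]]]]]; split.
    split=> //; split; first by rewrite HB; apply: cond1.
    exact: cond2 HW HV HE.
  by exists A; do 2 split=> //; apply: bwd.
Qed.
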